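(* Let $\mathcal{G}^{\mathbb{c}}=(\mathbb{C},\mathbb{E}^{\mathbb{c}})$ be a C-DMG and let $\mathbb{C}_\mathbb{X},\mathbb{C}_\mathbb{Y},\mathbb{C}_\mathbb{W}$ be pairwise disjoint subsets of $\mathbb{C}$. If $\mathbb{C}_\mathbb{X}$ and $\mathbb{C}_\mathbb{Y}$ are d-separated by $\mathbb{C}_\mathbb{W}$ in $\mathcal{G}^{\mathbb{c}}$, then in every ADMG $\mathcal{G}=(\mathbb{V},\mathbb{E})$ compatible with $\mathcal{G}^{\mathbb{c}}$, the sets $\mathbb{X}=\bigcup_{C\in\mathbb{C}_\mathbb{X}}C$ and $\mathbb{Y}=\bigcup_{C\in\mathbb{C}_\mathbb{Y}}C$ are d-separated by $\mathbb{W}=\bigcup_{C\in\mathbb{C}_\mathbb{W}}C$ in $\mathcal{G}$.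
   Context: An ADMG $\mathcal{G}=(\mathbb{V},\mathbb{E})$ is a graph on a finite vertex set $\mathbb{V}$ whose edges are directed edges $X\rightarrow Y$ and bidirected edges $X\leftrightarrow Y$, such that the directed edges form no directed cycle. A C-DMG $\mathcal{G}^{\mathbb{c}}=(\mathbb{C},\mathbb{E}^{\mathbb{c}})$ compatible with an ADMG $\mathcal{G}=(\mathbb{V},\mathbb{E})$ is the graph whose vertex set $\mathbb{C}=\{C_1,\dots,C_k\}$ is a partition of $\mathbb{V}$ (each vertex $C_i$ is a cluster of variables) and in which, for all $C_i,C_j\in\mathbb{C}$ (possibly $i=j$), $C_i\rightarrow C_j$ (resp. $C_i\leftrightarrow C_j$) is an edge iff there exist $X\in C_i$, $Y\in C_j$ with $X\rightarrow Y$ (resp. $X\leftrightarrow Y$) in $\mathbb{E}$; an ADMG is compatible with a C-DMG if the C-DMG arises from it in this way. A C-DMG may contain directed cycles and self-loops. In a graph $\mathcal{G}^*$ (ADMG or C-DMG), $\mathrm{De}(V)$ denotes the descendants of $V$ (vertices reachable by a directed path from $V$, including $V$ itself). A walk $\langle V_1,\dots,V_n\rangle$ (consecutive vertices joined by a specified edge) is blocked by a set $\mathbb{W}^*$ if (1) $V_1\in\mathbb{W}^*$ or $V_n\in\mathbb{W}^*$; or (2) for some $1<i<n$, the walk contains $V_{i-1}\,*\!-\!*\,V_i\rightarrow V_{i+1}$ or $V_{i-1}\leftarrow V_i\,*\!-\!*\,V_{i+1}$ (where $*\!-\!*$ is any edge type) and $V_i\in\mathbb{W}^*$; or (3) for some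 $1<i<n$, the walk contains $V_{i-1}\,*\!\!\rightarrow V_i\leftarrow\!\!*\,V_{i+1}$ (each of these two edges being either directed into $V_i$ or bidirected) and $\mathrm{De}(V_i)\cap\mathbb{W}^*=\emptyset$. A walk that is not blocked is active. A path is a walk with no repeated vertex. For disjoint vertex sets, $\mathbb{W}^*$ d-separates $\mathbb{X}^*$ and $\mathbb{Y}^*$ if it blocks every path from a vertex of $\mathbb{X}^*$ to a vertex of $\mathbb{Y}^*$. *)

(* Defs.v *)
From mathcomp Require Import all_boot.
Set Implicit Arguments. Unset Strict Implicit. Unset Printing Implicit Defensive.

(* Kind of the edge between consecutive vertices u, v of a walk:
   Fwd : u -> v,   Bwd : u <- v,   Bi : u <-> v. *)
Inductive ekind := Fwd | Bwd | Bi.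

Section MixedGraphs.
Variable V : finType.
Variables (dir bi : rel V). (* dir x y : x -> y ;  bi x y : x <-> y *)

Definition edge_ok (x : V) (k : ekind) (y : V) : bool :=
  match k with Fwd => dir x y | Bwd => dir y x | Bi => bi x y end.

Fixpoint is_walk (x : V) (s : seq (ekind * V)) : bool :=
  match s with
  | [::] => true
  | (k, y) :: s' => edge_ok x k y && is_walk y s'
  end.

Definition walk_verts (x : V) (s : seq (ekind * V)) : seq V := x :: map snd s.
Definition walk_end (x : V) (s : seq (ekind * V)) : V := last x (map snd s).

Definition is_path (x : V) (s : seq (ekind * V)) : bool :=
  is_walk x s && uniq (walk_verts x s).

Definition De (v : V) : {set V} := [set w | connect dir v w].

(* the edge entering V_i (from V_{i-1}) has an arrowhead at V_i *)
Definition head_in (k : ekind) : bool :=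
  match k with Fwd => true | Bwd => false | Bi => true end.
(* the edge leaving V_i (to V_{i+1}) has an arrowhead at V_i *)
Definition head_out (k : ekind) : bool :=
  match k with Fwd => false | Bwd => true | Bi => true end.
(* edge V_i -> V_{i+1} *)
Definition tail_out (k : ekind) : bool := match k with Fwd => true | _ => false end.
(* edge V_{i-1} <- V_i *)
Definition tail_in (k : ekind) : bool := match k with Bwd => true | _ => false end.

Definition blocked_at (W : {set V}) (k1 : ekind) (y : V) (k2 : ekind) : bool :=
  ((tail_out k2 || tail_in k1) && (y \in W))
  || (head_in k1 && head_out k2 && [disjoint De y & W]).

Fixpoint interior_blocked (W : {set V}) (s : seq (ekind * V)) : bool :=
  match s with
  | (k1, y) :: (((k2, _) :: _) as s') =>
      blocked_at W k1 y k2 || interior_blocked W s'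
  | _ => false
  end.

Definition walk_blocked (W : {set V}) (x : V) (s : seq (ekind * V)) : bool :=
  [|| x \in W, walk_end x s \in W | interior_blocked W s].

Definition dsep (X Y W : {set V}) : Prop :=
  forall (x : V) (s : seq (ekind * V)),
    is_path x s -> x \in X -> walk_end x s \in Y -> walk_blocked W x s.

Definition is_ADMG : Prop :=
  symmetric bi /\ (forall x y, dir x y -> ~~ connect dir y x).
End MixedGraphs.

(* The mixed graph (dirC, biC) on clusters C is the C-DMG induced by the
   ADMG (dir, bi) on V via the partition given by the surjective cluster map cl. *)
Definition compatible (V C : finType) (dir bi : rel V) (cl : V -> C)
  (dirC biC : rel C) : Prop :=
  (forall c : C, exists v, cl v = c) /\
  (forall c d : C, dirC c d = [exists x, exists y, [&& cl x == c, cl y == d & dir x y]]) /\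
  (forall c d : C, biC c d = [exists x, exists y, [&& cl x == c, cl y == d & bi x y]]).

(* Main.v *)
Require Import Defs.
From mathcomp Require Import all_boot zify.
Set Implicit Arguments. Unset Strict Implicit. Unset Printing Implicit Defensive.

Section Gen.
Variables (V : finType) (dir bi : rel V) (W : {set V}).
Notation ib := (interior_blocked dir W).

Lemma ib_cons a s : ib s -> ib (a :: s).
Proof. by case: a => k y; case: s => // [[k2 y2] s] /= ->; rewrite orbT. Qed.

Lemma ib_suffix s1 s2 : ib s2 -> ib (s1 ++ s2).
Proof. by elim: s1 => // a s1 IH /IH; apply: ib_cons. Qed.

Lemma ib_prefix s1 s2 : ib s1 -> ib (s1 ++ s2).
Proof.
elim: s1 => [|[k y] s1 IH] //.
case: s1 IH => [|[k2 y2] s1] IH; first by [].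
rewrite /=; by case/orP => [->//|/IH /= ->]; rewrite orbT.
Qed.

Lemma ib_cat s1 e s2 : ib (s1 ++ e :: s2) = ib (rcons s1 e) || ib (e :: s2).
Proof.
case: e => ke ye.
elim: s1 => [|[k y] s1 IH] //.
case: s1 IH => [|[k2 y2] s1] IH /=.
  by rewrite orbF.
by rewrite /= in IH; rewrite IH orbA.
Qed.

Lemma walk_cat x s1 s2 :
  is_walk dir bi x (s1 ++ s2) = is_walk dir bi x s1 && is_walk dir bi (walk_end x s1) s2.
Proof.
elim: s1 x => [|[k y] s1 IH] x //=.
by rewrite IH andbA.
Qed.

Lemma conn_De y y' : connect dir y y' -> ~~ [disjoint De dir y' & W] ->
  ~~ [disjoint De dir y & W].
Proof.
move=> hc; apply: contra; apply: disjointWl; apply/subsetP => w.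
rewrite !inE; exact: connect_trans hc.
Qed.

Lemma chase t y k kf z : is_walk dir bi y t -> head_in k -> head_out kf ->
  ~~ ib ((k, y) :: rcons t (kf, z)) -> ~~ [disjoint De dir y & W].
Proof.
elim: t y k => [|[k' y'] t IH] y k /=.
  by move=> _ hk hkf; rewrite /blocked_at hk hkf /= orbF; case/norP.
case/andP => e hw hk hkf; case/norP => hb hr.
case: k' e hb hr => e hb hr.
- apply: (@conn_De y y'); first exact: connect1.
  exact: (IH y' Fwd hw).
- by move: hb; rewrite /blocked_at hk /=; case/norP.
- by move: hb; rewrite /blocked_at hk /=; case/norP.
Qed.

Lemma map_split (T : Type) (U : eqType) (f : T -> U) (s : seq T) u :
  u \in map f s -> exists p1 b p2, s = p1 ++ b :: p2 /\ u = f b.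
Proof.
elim: s => [|a s IH] //=; rewrite inE; case/orP.
  by move/eqP => ->; exists [::], a, s.
by move/IH => [p1 [b [p2 [-> e]]]]; exists (a :: p1), b, p2.
Qed.

Lemma nonuniq_split (T : Type) (U : eqType) (f : T -> U) (s : seq T) :
  ~~ uniq (map f s) -> exists s1 a s2 b s3, s = s1 ++ a :: s2 ++ b :: s3 /\ f a = f b.
Proof.
elim: s => [|a s IH] //=; rewrite negb_and negbK; case/orP.
  case/map_split => p1 [b [p2 [-> e]]].
  by exists [::], a, p1, b, p2.
move/IH => [s1 [a' [s2 [b [s3 [-> e]]]]]].
by exists (a :: s1), a', s2, b, s3.
Qed.

Lemma ib_first k y e t : ~~ ib ((k, y) :: e :: t) -> ~~ blocked_at dir W k y e.1.
Proof. by case: e => ke ye /=; case/norP. Qed.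

Lemma w2p n : forall x s, size s < n -> is_walk dir bi x s -> ~~ walk_blocked dir W x s ->
  exists s', [/\ is_path dir bi x s', walk_end x s' = walk_end x s
               & ~~ walk_blocked dir W x s'].
Proof.
elim: n => // n IH x s hs hw hb.
case hu: (uniq (walk_verts x s)).
  by exists s; split => //; rewrite /is_path hw hu.
have : ~~ uniq (map snd ((Fwd, x) :: s)) by rewrite hu.
move/nonuniq_split => [s1 [[ka v] [s2 [[kb v'] [s3 [eq /= ev]]]]]].
subst v'.
move: hb; rewrite /walk_blocked => /norP [hx /norP [hend hib]].
case: s1 eq => [|c s1] /= eq.
- case: eq => _ ? ?; subst v s.
  have e3 : walk_end x (s2 ++ (kb, x) :: s3) = walk_end x s3.
    by rewrite /walk_end map_cat last_cat.
  have hA : size s3 < n by move: hs; rewrite size_cat /=; lia.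
  have hB : is_walk dir bi x s3.
    by move: hw; rewrite walk_cat => /andP [_ /= /andP [_ ->]].
  have hC : ~~ walk_blocked dir W x s3.
    rewrite /walk_blocked (negbTE hx) -e3 (negbTE hend) /=; apply: contra hib => h.
    by apply: ib_suffix; apply: ib_cons.
  have [s' [h1 h2 h3]] := IH x s3 hA hB hC.
  by exists s'; split => //; rewrite h2 e3.
- case: eq => ? ?; subst c s.
  have hib0 := hib.
  move: hw; rewrite walk_cat => /andP [hw1 /= /andP [he1 hw2]].
  move: hw2; rewrite walk_cat => /andP [hws2 /= /andP [he2 hw3]].
  move: hib; rewrite ib_cat => /norP [hi1].
  rewrite (ib_cat ((ka, v) :: s2)) => /norP [hi2 hi3].
  have ee : walk_end x (s1 ++ (ka, v) :: s3) =
            walk_end x (s1 ++ (ka, v) :: s2 ++ (kb, v) :: s3).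
    by rewrite /walk_end /= !map_cat !last_cat /= map_cat last_cat.
  have hA : size (s1 ++ (ka, v) :: s3) < n.
    by move: hs; rewrite !size_cat /= size_cat /=; lia.
  have hB : is_walk dir bi x (s1 ++ (ka, v) :: s3).
    by rewrite walk_cat hw1 /= he1 hw3.
  have hC : ~~ walk_blocked dir W x (s1 ++ (ka, v) :: s3).
    rewrite /walk_blocked (negbTE hx) ee (negbTE hend) /= ib_cat (negbTE hi1) /=.
    have [k' hk'] : exists k', ~~ blocked_at dir W ka v k'.
      by case: s2 {hws2 he2 hib0 hu hs hend ee hA hB} hi2 => [|[ke ye] t] /= h;
        [exists kb | exists ke]; move: h; rewrite ?orbF //; by case/norP.
    have hwl : is_walk dir bi v (rcons s2 (kb, v)).
      by rewrite -cats1 walk_cat hws2 /= he2.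
    case: s3 {hw3 ee hu hs hend hA hB} hi3 hib0 => [|[k3 z] s4] //= hi3 hib0.
    have hpre : ~~ ib ((ka, v) :: rcons (rcons s2 (kb, v)) (k3, z)).
      apply: contra hib0 => h; apply: ib_suffix.
      have -> : (ka, v) :: s2 ++ (kb, v) :: (k3, z) :: s4 =
                ((ka, v) :: rcons (rcons s2 (kb, v)) (k3, z)) ++ s4.
        by rewrite /= -!cats1 -!catA.
      exact: ib_prefix.
    have hc : head_in ka -> head_out k3 -> ~~ [disjoint De dir v & W].
      by move=> hh1 hh2; apply: (chase hwl hh1 hh2 hpre).
    move/norP: hi3 => [hb3 hr3]; rewrite (negbTE hr3) orbF.
    move: hk' hb3 hc; rewrite /blocked_at; clear -hx.
    move: (v \in W) [disjoint De dir v & W] => b1 b2.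
    case: ka; case: kb; case: k3; case: k'; case: b1; case: b2 => /=; try done; by move=> _ _ /(_ isT isT).
  have [s' [h1 h2 h3]] := IH x (s1 ++ (ka, v) :: s3) hA hB hC.
  by exists s'; split => //; rewrite h2 ee.
Qed.
End Gen.

Section Map.
Variables (C V : finType) (dirC biC : rel C) (dir bi : rel V) (cl : V -> C).
Hypothesis hdir : forall c d : C,
  dirC c d = [exists x, exists y, [&& cl x == c, cl y == d & dir x y]].
Hypothesis hbi : forall c d : C,
  biC c d = [exists x, exists y, [&& cl x == c, cl y == d & bi x y]].

Definition fm (e : ekind * V) : ekind * C := (e.1, cl e.2).

Lemma dir_map x y : dir x y -> dirC (cl x) (cl y).
Proof.
by move=> e; rewrite hdir; apply/existsP; exists x; apply/existsP; exists y; rewrite !eqxx e.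
Qed.

Lemma bi_map x y : bi x y -> biC (cl x) (cl y).
Proof.
by move=> e; rewrite hbi; apply/existsP; exists x; apply/existsP; exists y; rewrite !eqxx e.
Qed.

Lemma walk_map x s : is_walk dir bi x s -> is_walk dirC biC (cl x) (map fm s).
Proof.
elim: s x => [|[k y] s IH] x //= /andP [e hw]; rewrite IH // andbT.
by case: k e => /= e; [apply: dir_map | apply: dir_map | apply: bi_map].
Qed.

Lemma end_map x s : walk_end (cl x) (map fm s) = cl (walk_end x s).
Proof. by rewrite /walk_end -map_comp (_ : snd \o fm = cl \o snd) // map_comp last_map. Qed.

Lemma connect_map x y : connect dir x y -> connect dirC (cl x) (cl y).
Proof.
case/connectP => p hp ->; elim: p x hp => [|z p IH] x //= /andP [e hp].
exact: connect_trans (connect1 (dir_map e)) (IH _ hp).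
Qed.

Variable CW : {set C}.

Lemma disj_map y : [disjoint De dirC (cl y) & CW] -> [disjoint De dir y & cl @^-1: CW].
Proof.
rewrite !disjoint_subset => /subsetP h; apply/subsetP => w; rewrite !inE => hw.
by have := h (cl w); rewrite !inE => ->//; apply: connect_map.
Qed.

Lemma blocked_map k1 y k2 : ~~ blocked_at dir (cl @^-1: CW) k1 y k2 ->
  ~~ blocked_at dirC CW k1 (cl y) k2.
Proof.
rewrite /blocked_at inE; have := @disj_map y.
move: [disjoint De dirC (cl y) & CW] [disjoint De dir y & cl @^-1: CW] => b1 b2.
by case: b1; case: b2; case: k1; case: k2; case: (cl y \in CW) => //= /(_ isT).
Qed.

Lemma ib_map s : ~~ interior_blocked dir (cl @^-1: CW) s ->
  ~~ interior_blocked dirC CW (map fm s).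
Proof.
elim: s => [|[k y] s IH] //.
case: s IH => [|[k2 y2] s] IH //= /norP [hb hi].
by rewrite negb_or blocked_map //=; apply: IH.
Qed.
End Map.

Theorem theorem1 (C : finType) (dirC biC : rel C) (CX CY CW : {set C}) :
  [disjoint CX & CY] -> [disjoint CX & CW] -> [disjoint CY & CW] ->
  dsep dirC biC CX CY CW ->
  forall (V : finType) (dir bi : rel V) (cl : V -> C),
    is_ADMG dir bi -> compatible dir bi cl dirC biC ->
    dsep dir bi (cl @^-1: CX) (cl @^-1: CY) (cl @^-1: CW).
Proof.
move=> _ _ _ hsep V dir bi cl _ [_ [hdir hbi]] x s /andP [hw _] hx hy.
apply/negPn/negP => hnb.
have hw' := walk_map hdir hbi hw.
have hnb' : ~~ walk_blocked dirC CW (cl x) (map (fm cl) s).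
  move: hnb; rewrite /walk_blocked end_map !inE => /norP [h1 /norP [h2 hi]].
  by rewrite (negbTE h1) (negbTE h2) /=; apply: ib_map.
have [s' [hp he hb]] := w2p (ltnSn _) hw' hnb'.
move: hb; apply/negP/negPn; apply: hsep => //.
  by rewrite inE in hx.
by rewrite he end_map; rewrite inE in hy.
Qed.
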